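(* Let $D,p\ge1$ be integers, let $r_1,\dots,r_p,s_1,\dots,s_p,t_1,\dots,t_p\ge0$ be integers, and let $0=d_0<d_1<\cdots<d_p=D$ be integers. Put $A_j=d_j-d_{j-1}$ for $j=1,\dots,p$. For every complex $z$ with $|z|>1$, $$\int_{[0,1]^D}\prod_{j=1}^p\frac{\prod_{\ell=d_{j-1}+1}^{d_j}x_\ell^{r_j}(1-x_\ell)^{s_j}}{(z-x_1\cdots x_{d_j})^{t_j+1}}\,\mathrm{d}x_1\cdots\mathrm{d}x_D = z^{-(t_1+\cdots+t_p+p-1)}\prod_{j=1}^p\frac{s_j!^{A_j}}{t_j!}\sum_{k_1\ge\cdots\ge k_p\ge1}z^{-k_1}\prod_{j=1}^p\frac{(k_j-k_{j+1}+1)_{t_j}}{(k_j+r_j)_{s_j+1}^{A_j}},$$ where $k_{p+1}=1$. The series on the right has depth $p$ and weight $D$.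
   Context: $(\alpha)_m=\alpha(\alpha+1)\cdots(\alpha+m-1)$ is the Pochhammer symbol, with $(\alpha)_0=1$. *)

(* Defs.v *)
From Stdlib Require Import Reals List Factorial.
From Coquelicot Require Import Coquelicot.
Open Scope C_scope.

Fixpoint poch (a m : nat) : nat :=
  match m with
  | O => 1%nat
  | S m' => (poch a m' * (a + m'))%nat
  end.

Definition csum (lo n : nat) (f : nat -> C) : C :=
  fold_right Cplus 0 (map f (seq lo n)).

Definition cprod (lo n : nat) (f : nat -> C) : C :=
  fold_right Cmult 1 (map f (seq lo n)).

Definition upd (x : nat -> R) (i : nat) (y : R) : nat -> R :=
  fun l => if Nat.eqb l i then y else x l.

(* Iterated integral over [0,1]^n of F in the coordinates x_1, ..., x_n
   (coordinates are indexed 1..n; other coordinates are set to 0):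
   iint n F = int_0^1 ... int_0^1 F(x_1,...,x_n) dx_n ... dx_1. *)
Fixpoint iint (n : nat) (F : (nat -> R) -> C) : C :=
  match n with
  | O => F (fun _ => 0%R)
  | S m => iint m (fun x => @RInt C_R_CompleteNormedModule (fun y => F (upd x (S m) y)) 0%R 1%R)
  end.

Definition xprod (x : nat -> R) (m : nat) : C :=
  cprod 1 m (fun l => RtoC (x l)).

Definition integrand (p : nat) (d r s t : nat -> nat) (z : C) (x : nat -> R) : C :=
  cprod 1 p (fun j =>
    cprod (S (d (j - 1)%nat)) (d j - d (j - 1))%nat
      (fun l => Cpow (RtoC (x l)) (r j) * Cpow (RtoC (1 - x l)%R) (s j))
    / Cpow (z - xprod x (d j)) (S (t j))).

Definition sfactor (d r s t : nat -> nat) (j kj kj1 : nat) : C :=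
  RtoC (INR (poch (kj - kj1 + 1) (t j)))
  / Cpow (RtoC (INR (poch (kj + r j) (S (s j))))) (d j - d (j - 1))%nat.

(* tail_sum m j k = sum over k = k_j >= k_{j+1} >= ... >= k_{j+m} >= 1 of
   prod_{i=j}^{j+m} sfactor i k_i k_{i+1}, with k_{j+m+1} = 1. *)
Fixpoint tail_sum (d r s t : nat -> nat) (m j k : nat) : C :=
  match m with
  | O => sfactor d r s t j k 1
  | S m' => csum 1 k (fun k' => sfactor d r s t j k k' * tail_sum d r s t m' (S j) k')
  end.

(* Term of index k1 of the series (k1 >= 1) : the sum over
   k1 >= k2 >= ... >= kp >= 1 of z^{-k1} prod_{j=1}^p sfactor j k_j k_{j+1}, k_{p+1} = 1.
   The series sum_{k_1 >= ... >= k_p >= 1} is summed by grouping according to k_1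
   (it converges absolutely for |z| > 1). *)
Definition series_term (p : nat) (d r s t : nat -> nat) (z : C) (n : nat) : C :=
  let k1 := S n in
  / Cpow z k1 * tail_sum d r s t (p - 1) 1 k1.

(* Main.v *)
Require Import Defs.
From Stdlib Require Import Reals List Factorial Lia Lra.
From Coquelicot Require Import Coquelicot.
Open Scope C_scope.

Lemma cprod_0 lo f : cprod lo 0 f = 1.
Proof. reflexivity. Qed.
Lemma cprod_Sl lo n f : cprod lo (S n) f = f lo * cprod (S lo) n f.
Proof. reflexivity. Qed.
Lemma csum_0 lo f : csum lo 0 f = 0.
Proof. reflexivity. Qed.
Lemma csum_Sl lo n f : csum lo (S n) f = f lo + csum (S lo) n f.
Proof. reflexivity. Qed.

Lemma cprod_add a : forall lo b f, cprod lo (a + b) f = cprod lo a f * cprod (lo + a) b f.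
Proof.
  induction a; intros lo b f.
  - rewrite cprod_0, Nat.add_0_r. simpl. ring.
  - rewrite Nat.add_succ_l, !cprod_Sl, IHa. replace (S lo + a)%nat with (lo + S a)%nat by lia. ring.
Qed.

Lemma cprod_Sr lo n f : cprod lo (S n) f = cprod lo n f * f (lo + n)%nat.
Proof.
  replace (S n) with (n + 1)%nat by lia. rewrite cprod_add, cprod_Sl, cprod_0. ring.
Qed.

Lemma csum_add a : forall lo b f, csum lo (a + b) f = csum lo a f + csum (lo + a) b f.
Proof.
  induction a; intros lo b f.
  - rewrite csum_0, Nat.add_0_r. simpl. ring.
  - rewrite Nat.add_succ_l, !csum_Sl, IHa. replace (S lo + a)%nat with (lo + S a)%nat by lia. ring.
Qed.

Lemma csum_Sr lo n f : csum lo (S n) f = csum lo n f + f (lo + n)%nat.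
Proof.
  replace (S n) with (n + 1)%nat by lia. rewrite csum_add, csum_Sl, csum_0. ring.
Qed.

Lemma cprod_ext n : forall lo f g, (forall i, (lo <= i < lo + n)%nat -> f i = g i) ->
  cprod lo n f = cprod lo n g.
Proof.
  induction n; intros lo f g H. reflexivity.
  rewrite !cprod_Sl. f_equal. apply H; lia. apply IHn. intros; apply H; lia.
Qed.

Lemma csum_ext n : forall lo f g, (forall i, (lo <= i < lo + n)%nat -> f i = g i) ->
  csum lo n f = csum lo n g.
Proof.
  induction n; intros lo f g H. reflexivity.
  rewrite !csum_Sl. f_equal. apply H; lia. apply IHn. intros; apply H; lia.
Qed.

Lemma cprod_mult n : forall lo f g, cprod lo n (fun i => f i * g i) = cprod lo n f * cprod lo n g.
Proof.
  induction n; intros. rewrite !cprod_0; ring. rewrite !cprod_Sl, IHn. ring.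
Qed.

Lemma cprod_pow n : forall lo f k, cprod lo n (fun i => Cpow (f i) k) = Cpow (cprod lo n f) k.
Proof.
  induction n; intros. rewrite !cprod_0, Cpow_1_l. reflexivity.
  rewrite !cprod_Sl, IHn, Cpow_mult_l. reflexivity.
Qed.

Lemma cprod_const n : forall lo c, cprod lo n (fun _ => c) = Cpow c n.
Proof.
  induction n; intros. reflexivity. rewrite cprod_Sl, IHn. reflexivity.
Qed.

Lemma csum_scal n : forall lo c f, csum lo n (fun i => c * f i) = c * csum lo n f.
Proof.
  induction n; intros. rewrite !csum_0; ring. rewrite !csum_Sl, IHn. ring.
Qed.

Lemma csum_plus n : forall lo f g, csum lo n (fun i => f i + g i) = csum lo n f + csum lo n g.
Proof.
  induction n; intros. rewrite !csum_0; ring. rewrite !csum_Sl, IHn. ring.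
Qed.

Lemma Cmod_csum n : forall lo f, (Cmod (csum lo n f) <= fold_right Rplus 0 (map (fun i => Cmod (f i)) (seq lo n)))%R.
Proof.
  induction n; intros. unfold csum; simpl. rewrite Cmod_0. lra.
  rewrite csum_Sl. simpl. eapply Rle_trans. apply Cmod_triangle. specialize (IHn (S lo) f). lra.
Qed.

Lemma pow_le_one (x : R) n : (0 <= x <= 1)%R -> (0 <= x ^ n <= 1)%R.
Proof.
  intros H. induction n; simpl. lra. split. apply Rmult_le_pos; lra. nra.
Qed.

Notation CRInt f := (@RInt C_R_CompleteNormedModule f 0%R 1%R).

Lemma normC_R (b : C) : @norm _ C_R_NormedModule b = Cmod b.
Proof.
  destruct b as [u v]. unfold norm. simpl. unfold prod_norm. simpl. unfold Cmod. simpl.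
  unfold abs; simpl. unfold norm; simpl. unfold abs; simpl.
  assert (Hu : (Rabs u * Rabs u = u * u)%R) by (rewrite <- Rabs_mult; apply Rabs_right; nra).
  assert (Hv : (Rabs v * Rabs v = v * v)%R) by (rewrite <- Rabs_mult; apply Rabs_right; nra).
  rewrite !Rmult_1_r, Hu, Hv. reflexivity.
Qed.

Lemma is_RInt_Cmult_l (f : R -> C) (a : C) (If : C) (lo hi : R) :
  @is_RInt C_R_NormedModule f lo hi If ->
  @is_RInt C_R_NormedModule (fun y => a * f y) lo hi (a * If).
Proof.
  intros H.
  assert (H1 := @is_RInt_fct_extend_fst R_NormedModule R_NormedModule f lo hi If H).
  assert (H2 := @is_RInt_fct_extend_snd R_NormedModule R_NormedModule f lo hi If H).
  destruct a as [a1 a2].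
  assert (E1 := @is_RInt_minus R_NormedModule _ _ lo hi _ _
     (@is_RInt_scal R_NormedModule _ lo hi a1 _ H1) (@is_RInt_scal R_NormedModule _ lo hi a2 _ H2)).
  assert (E2 := @is_RInt_plus R_NormedModule _ _ lo hi _ _
     (@is_RInt_scal R_NormedModule _ lo hi a1 _ H2) (@is_RInt_scal R_NormedModule _ lo hi a2 _ H1)).
  assert (P := @is_RInt_fct_extend_pair R_NormedModule R_NormedModule (fun y => (a1, a2) * f y) lo hi _ _ E1 E2).
  destruct If as [i1 i2].
  replace ((a1, a2) * (i1, i2)) with (minus (scal a1 i1) (scal a2 i2), plus (scal a1 i2) (scal a2 i1)).
  - exact P.
  - unfold Cmult, minus, plus, scal, opp; simpl. unfold mult; simpl. f_equal; ring.
Qed.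

Lemma RtoC_is_RInt (f : R -> R) lo hi (If : R) :
  is_RInt f lo hi If -> @is_RInt C_R_NormedModule (fun y => RtoC (f y)) lo hi (RtoC If).
Proof.
  intros H. unfold RtoC.
  apply (@is_RInt_fct_extend_pair R_NormedModule R_NormedModule (fun y => (f y, 0%R)) lo hi If 0%R).
  - exact H.
  - simpl. assert (E := @is_RInt_const R_NormedModule lo hi 0%R).
    match type of E with is_RInt _ _ _ ?q => assert (Z : q = 0%R) end.
    { unfold scal; simpl; unfold mult; simpl; ring. }
    rewrite Z in E. exact E.
Qed.

Definition box (n : nat) (x : nat -> R) := forall l : nat, (0 <= x l <= 1)%R.

Lemma box_upd m x y : box m x -> (0 <= y <= 1)%R -> box (S m) (upd x (S m) y).
Proof.
  intros Hb Hy l. unfold upd. destruct (Nat.eqb_spec l (S m)). auto. apply Hb.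
Qed.

Lemma upd_other x i y l : l <> i -> upd x i y l = x l.
Proof. intros H. unfold upd. destruct (Nat.eqb_spec l i); congruence. Qed.
Lemma upd_same x i y : upd x i y i = y.
Proof. unfold upd. rewrite Nat.eqb_refl. reflexivity. Qed.

Lemma iint_S m F : iint (S m) F = iint m (fun x => CRInt (fun y => F (upd x (S m) y))).
Proof. reflexivity. Qed.

Lemma open01 y : (Rmin 0 1 < y < Rmax 0 1)%R -> (0 <= y <= 1)%R.
Proof. rewrite Rmin_left, Rmax_right by lra. lra. Qed.

Lemma iint_ext n : forall F G, (forall x, box n x -> F x = G x) -> iint n F = iint n G.
Proof.
  induction n; intros F G H.
  - simpl. apply H. intros l; lra.
  - rewrite !iint_S. apply IHn. intros x Hx. apply (@RInt_ext C_R_CompleteNormedModule). intros y Hy.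
    apply H. apply box_upd; auto. apply open01; auto.
Qed.

Fixpoint Good (n : nat) (F : (nat -> R) -> C) : Prop :=
  match n with
  | O => True
  | S m => (forall x, box m x -> @ex_RInt C_R_NormedModule (fun y => F (upd x (S m) y)) 0 1)
           /\ Good m (fun x => CRInt (fun y => F (upd x (S m) y)))
  end.

Lemma Good_ext n : forall F G, (forall x, box n x -> F x = G x) -> Good n F -> Good n G.
Proof.
  induction n; intros F G H HF. exact I.
  destruct HF as [H1 H2]. split.
  - intros x Hx. eapply (@ex_RInt_ext C_R_NormedModule); [|apply H1; exact Hx].
    intros y Hy. apply H. apply box_upd; auto. apply open01; auto.
  - eapply IHn; [|exact H2]. intros x Hx. apply (@RInt_ext C_R_CompleteNormedModule). intros y Hy.
    apply H. apply box_upd; auto. apply open01; auto.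
Qed.

Lemma Good_zero n : Good n (fun _ => 0) /\ iint n (fun _ => 0) = 0.
Proof.
  induction n. split; [exact I|reflexivity].
  destruct IHn as [G0 I0].
  assert (E : CRInt (fun _ : R => RtoC 0) = RtoC 0).
  { rewrite RInt_const. unfold scal; simpl. unfold prod_scal; simpl. unfold scal; simpl; unfold mult; simpl. unfold RtoC. f_equal; ring. }
  split.
  - split. intros; apply ex_RInt_const.
    eapply Good_ext; [|exact G0]. intros x _. rewrite E. reflexivity.
  - rewrite iint_S. rewrite (iint_ext n _ (fun _ => RtoC 0)). exact I0. intros; exact E.
Qed.

Lemma Good_plus n : forall F G, Good n F -> Good n G ->
  Good n (fun x => F x + G x) /\ iint n (fun x => F x + G x) = iint n F + iint n G.
Proof.
  induction n; intros F G HF HG. split; [exact I|reflexivity].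
  destruct HF as [F1 F2], HG as [G1 G2].
  assert (E : forall x, box n x -> CRInt (fun y => F (upd x (S n) y) + G (upd x (S n) y)) =
     CRInt (fun y => F (upd x (S n) y)) + CRInt (fun y => G (upd x (S n) y))).
  { intros x Hx. apply (@RInt_plus C_R_CompleteNormedModule); auto. }
  destruct (IHn _ _ F2 G2) as [P1 P2].
  split.
  - split. intros x Hx. apply (@ex_RInt_plus C_R_NormedModule); auto.
    eapply Good_ext; [|exact P1]. intros x Hx. symmetry. apply E; auto.
  - rewrite !iint_S. rewrite <- P2. apply iint_ext. apply E.
Qed.

Lemma Good_csum n K : forall lo (Fk : nat -> (nat -> R) -> C), (forall k, (lo <= k < lo + K)%nat -> Good n (Fk k)) ->
  Good n (fun x => csum lo K (fun k => Fk k x)) /\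
  iint n (fun x => csum lo K (fun k => Fk k x)) = csum lo K (fun k => iint n (Fk k)).
Proof.
  induction K; intros lo Fk HF.
  - apply Good_zero.
  - destruct (IHK (S lo) Fk) as [A B]. intros k Hk; apply HF; lia.
    destruct (Good_plus n (Fk lo) _ (HF lo ltac:(lia)) A) as [C1 C2].
    split. exact C1. rewrite csum_Sl, <- B. exact C2.
Qed.

Lemma iint_mono n : forall (phi : nat -> R -> C) (Iv : nat -> C) c G,
  (forall l, (1 <= l <= n)%nat -> @is_RInt C_R_NormedModule (phi l) 0 1 (Iv l)) ->
  (forall x, box n x -> G x = c * cprod 1 n (fun l => phi l (x l))) ->
  Good n G /\ iint n G = c * cprod 1 n Iv.
Proof.
  induction n; intros phi Iv c G HI HG.
  - split. exact I. simpl. rewrite HG. reflexivity. intros l; lra.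
  - assert (E : forall x, box n x -> @is_RInt C_R_NormedModule (fun y => G (upd x (S n) y)) 0 1
                 ((c * Iv (S n)) * cprod 1 n (fun l => phi l (x l)))).
    { intros x Hx.
      apply (@is_RInt_ext C_R_NormedModule (fun y => (c * cprod 1 n (fun l => phi l (x l))) * phi (S n) y)).
      - intros y Hy. rewrite HG by (apply box_upd; auto; apply open01; auto).
        rewrite cprod_Sr. replace (1 + n)%nat with (S n) by lia. rewrite upd_same.
        rewrite (cprod_ext n 1 (fun l => phi l (upd x (S n) y l)) (fun l => phi l (x l))).
        symmetry; apply Cmult_assoc. intros i Hi. rewrite upd_other by lia. reflexivity.
      - replace (c * Iv (S n) * cprod 1 n (fun l => phi l (x l))) with
          ((c * cprod 1 n (fun l => phi l (x l))) * Iv (S n)) by ring.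
        apply is_RInt_Cmult_l. apply HI. lia. }
    destruct (IHn phi Iv (c * Iv (S n)) (fun x => CRInt (fun y => G (upd x (S n) y)))) as [A B].
    + intros l Hl. apply HI. lia.
    + intros x Hx. apply (@is_RInt_unique C_R_CompleteNormedModule). apply E. auto.
    + split. split. intros x Hx. eexists. apply E. auto. exact A.
      rewrite iint_S, B, cprod_Sr. replace (1 + n)%nat with (S n) by lia. ring.
Qed.

Lemma poch_Sl m : forall n, poch n (S m) = (n * poch (S n) m)%nat.
Proof.
  induction m; intros n. simpl. lia.
  change (poch n (S (S m))) with (poch n (S m) * (n + S m))%nat.
  rewrite IHm. simpl. lia.
Qed.

Lemma poch_pos m : forall n, (0 < n)%nat -> (0 < poch n m)%nat.
Proof.
  induction m; intros n Hn. simpl; lia. simpl. specialize (IHm n Hn). nia.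
Qed.

Lemma is_RInt_val {V : NormedModule R_AbsRing} (f : R -> V) a b l l' :
  is_RInt f a b l -> l = l' -> is_RInt f a b l'.
Proof. intros H E; subst; exact H. Qed.

Lemma is_RInt_valR (f : R -> R) a b (l l' : R) :
  is_RInt f a b l -> l = l' -> is_RInt f a b l'.
Proof. intros H E; subst; exact H. Qed.

Lemma beta_R b : forall a, is_RInt (fun y => (y ^ a * (1 - y) ^ b)%R) 0 1
   (INR (fact b) / INR (poch (S a) (S b)))%R.
Proof.
  induction b; intros a.
  - eapply is_RInt_valR.
    + eapply is_RInt_ext; [|apply (is_RInt_pow 0 1 a)]. intros y _. simpl. ring.
    + rewrite pow1, pow_i by lia. simpl poch. rewrite !Nat.add_0_r.
      replace (INR (fact 0)) with 1%R by reflexivity. unfold Rdiv. ring.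
  - eapply is_RInt_valR.
    + eapply is_RInt_ext; [|apply (is_RInt_minus _ _ 0 1 _ _ (IHb a) (IHb (S a)))].
      intros y _. simpl. unfold minus, plus, opp; simpl. ring.
    + assert (H1 := poch_pos (S b) (S a) ltac:(lia)).
      assert (H2 := poch_pos (S b) (S (S a)) ltac:(lia)).
      assert (E1 : poch (S a) (S (S b)) = (poch (S a) (S b) * (S a + S b))%nat) by reflexivity.
      assert (E3 : (fact (S b) = S b * fact b)%nat) by reflexivity.
      assert (Q : (INR (poch (S a) (S b)) * INR (S a + S b) = INR (S a) * INR (poch (S (S a)) (S b)))%R).
      { rewrite <- !mult_INR. f_equal. rewrite <- poch_Sl. reflexivity. }
      rewrite E3, E1, !mult_INR.
      apply lt_INR in H1, H2.
      set (A := INR (poch (S a) (S b))) in *. set (B := INR (poch (S (S a)) (S b))) in *.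
      set (F := INR (fact b)) in *.
      rewrite plus_INR in *. rewrite !S_INR in *.
      assert (0 <= INR a)%R by apply pos_INR. assert (0 <= INR b)%R by apply pos_INR.
      simpl in H1, H2.
      unfold minus, plus, opp; simpl.
      apply (Rmult_eq_reg_r (A * B)); [|nra].
      field_simplify; try lra.
      apply (Rmult_eq_reg_r (INR b + INR a + 2)); [|lra]. unfold Rdiv.
      rewrite Rmult_assoc, Rinv_l, Rmult_1_r by lra.
      transitivity (- F * (A * (INR a + 1 + (INR b + 1)) - (INR a + 1) * B) + F * B * (INR b + 1))%R.
      ring. rewrite Q. ring.
Qed.

Lemma beta_C a b : @is_RInt C_R_NormedModule (fun y => RtoC (y ^ a * (1 - y) ^ b)%R) 0 1
   (RtoC (INR (fact b) / INR (poch (S a) (S b)))%R).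
Proof. apply RtoC_is_RInt. apply beta_R. Qed.

Lemma series_norm_le (b : nat -> C) (B : C) (M : nat -> R) (SM : R) :
  is_series b B -> (forall k, (Cmod (b k) <= M k)%R) -> is_series M SM -> (Cmod B <= SM)%R.
Proof.
  intros Hb HM HS.
  assert (L1 : is_lim_seq (fun n => norm (sum_n b n)) (norm B)).
  { apply (filterlim_comp _ _ _ (sum_n b) norm eventually (locally B)). exact Hb. apply (@filterlim_norm C_AbsRing C_NormedModule). }
  assert (L2 : is_lim_seq (sum_n M) SM) by exact HS.
  assert (Hle : forall n, (norm (sum_n b n) <= sum_n M n)%R).
  { intros n. unfold sum_n. eapply Rle_trans. apply (@norm_sum_n_m C_AbsRing C_NormedModule).
    apply sum_n_m_le. intros k. eapply Rle_trans; [|apply (HM k)]. right. reflexivity. }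
  assert (Le := is_lim_seq_le _ _ _ _ Hle L1 L2). simpl in Le.
  exact Le.
Qed.

Lemma series_tail_le (b : nat -> C) (B : C) (M : nat -> R) (SM : R) N :
  is_series b B -> (forall k, (Cmod (b k) <= M k)%R) -> is_series M SM ->
  (Cmod (B - sum_n b N) <= SM - sum_n M N)%R.
Proof.
  intros Hb HM HS.
  apply (series_norm_le (fun k => b (S N + k)%nat) _ (fun k => M (S N + k)%nat)).
  - apply is_series_incr_n. lia. simpl pred.
    match goal with |- is_series _ ?q => replace q with B end. exact Hb.
    match goal with |- _ = plus (_ - ?s1) ?s2 => change s2 with s1 end.
    set (u := sum_n b N). clearbody u. unfold plus; simpl. destruct u as [u1 u2]; destruct B as [b1 b2].
    unfold Cminus, Cplus, Copp; simpl; f_equal; ring.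
  - intros k; apply HM.
  - apply is_series_incr_n. lia. simpl pred.
    match goal with |- is_series _ ?q => replace q with SM end. exact HS.
    match goal with |- _ = plus (_ - ?s1)%R ?s2 => change s2 with s1 end.
    set (u := sum_n M N). clearbody u. unfold plus; simpl. ring.
Qed.

Definition clamp (y : R) : R := Rmax 0 (Rmin 1 y).
Lemma clamp_in y : (0 <= clamp y <= 1)%R.
Proof. unfold clamp, Rmax, Rmin. repeat destruct Rle_dec; lra. Qed.
Lemma clamp_id y : (0 <= y <= 1)%R -> clamp y = y.
Proof. intros H. unfold clamp, Rmax, Rmin. repeat destruct Rle_dec; lra. Qed.

Lemma RInt_series (h : nat -> R -> C) (H : R -> C) (M : nat -> R) :
  (forall k, @ex_RInt C_R_NormedModule (h k) 0 1) ->
  (forall k y, (0 <= y <= 1)%R -> (Cmod (h k y) <= M k)%R) -> ex_series M ->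
  (forall y, (0 <= y <= 1)%R -> is_series (fun k => h k y) (H y)) ->
  is_series (fun k => CRInt (h k)) (CRInt H).
Proof.
  intros Hex HM [SM HS] HH.
  set (f := fun (N : nat) (y : R) => @sum_n C_AbelianMonoid (fun k => h k (clamp y)) N).
  set (g := fun y => H (clamp y)).
  assert (Hf : forall N, @is_RInt C_R_NormedModule (f N) 0 1 (@sum_n C_AbelianMonoid (fun k => CRInt (h k)) N)).
  { intros N. unfold f. induction N.
    - eapply (@is_RInt_ext C_R_NormedModule (h 0%nat)).
      intros y Hy. rewrite clamp_id. symmetry. exact (@sum_O C_AbelianMonoid (fun k => h k y)). apply open01; auto.
      eapply is_RInt_val. apply (@RInt_correct C_R_CompleteNormedModule). apply Hex.
      symmetry. exact (@sum_O C_AbelianMonoid (fun k => CRInt (h k))).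
    - eapply is_RInt_val. eapply (@is_RInt_ext C_R_NormedModule).
      2: apply (@is_RInt_plus C_R_NormedModule _ _ 0 1 _ _ IHN
                  (@RInt_correct C_R_CompleteNormedModule _ _ _ (Hex (S N)))).
      intros y Hy. symmetry. unfold f. etransitivity.
      exact (@sum_Sn C_AbelianMonoid (fun k => h k (clamp y)) N).
      cbv beta. replace (h (S N) (clamp y)) with (h (S N) y) by (rewrite clamp_id; [reflexivity| apply open01; auto]).
      reflexivity.
      symmetry. exact (@sum_Sn C_AbelianMonoid (fun k => CRInt (h k)) N). }
  assert (Hlim : filterlim f eventually (@locally (fct_UniformSpace R C_R_CompleteNormedModule) g)).
  { apply (proj2 (filterlim_locally f g)). intros eps.
    assert (L : is_lim_seq (sum_n M) SM) by exact HS.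
    apply is_lim_seq_spec in L. destruct (L eps) as [N0 HN0].
    exists N0. intros N HN. intros t.
    apply (@norm_compat1 R_AbsRing C_R_NormedModule).
    rewrite normC_R.
    specialize (HN0 N HN).
    assert (T := series_tail_le (fun k => h k (clamp t)) (H (clamp t)) M SM N
                   (HH _ (clamp_in t)) (fun k => HM k _ (clamp_in t)) HS).
    change (minus (f N t) (g t)) with (Cminus (@sum_n C_AbelianMonoid (fun k => h k (clamp t)) N) (H (clamp t))).
    set (s0 := @sum_n C_AbelianMonoid (fun k => h k (clamp t)) N) in *.
    replace (s0 - H (clamp t)) with (- (H (clamp t) - s0)) by ring.
    rewrite Cmod_opp. apply Rabs_def2 in HN0. lra. }
  destruct (@filterlim_RInt nat C_R_CompleteNormedModule f 0 1 eventually _ g _ Hf Hlim) as [If [HIf HgI]].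
  replace (CRInt H) with If.
  - exact HIf.
  - symmetry. rewrite (@RInt_ext C_R_CompleteNormedModule H g).
    apply (@is_RInt_unique C_R_CompleteNormedModule). exact HgI.
    intros y Hy. unfold g. rewrite clamp_id. reflexivity. apply open01; auto.
Qed.

Lemma iint_series n : forall (f : nat -> (nat -> R) -> C) (M : nat -> R) (F : (nat -> R) -> C),
  (forall k, Good n (f k)) -> (forall k x, box n x -> (Cmod (f k x) <= M k)%R) -> ex_series M ->
  (forall x, box n x -> is_series (fun k => f k x) (F x)) ->
  is_series (fun k => iint n (f k)) (iint n F).
Proof.
  induction n; intros f M F HG HM HS HF.
  - simpl. apply HF. intros l; lra.
  - change (is_series (fun k => iint n (fun x => CRInt (fun y => f k (upd x (S n) y))))
                      (iint n (fun x => CRInt (fun y => F (upd x (S n) y))))).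
    apply (IHn _ M).
    + intros k. apply (HG k).
    + intros k x Hx. rewrite <- normC_R.
      replace (M k) with ((1 - 0) * M k)%R by ring.
      apply (@norm_RInt_le_const C_R_NormedModule (fun y => f k (upd x (S n) y)) 0 1). lra.
      intros y Hy. rewrite normC_R. apply HM. apply box_upd; auto.
      apply (@RInt_correct C_R_CompleteNormedModule). apply (HG k). exact Hx.
    + exact HS.
    + intros x Hx. apply (RInt_series (fun k y => f k (upd x (S n) y)) _ M).
      * intros k. apply (HG k). exact Hx.
      * intros k y Hy. apply HM. apply box_upd; auto.
      * exact HS.
      * intros y Hy. apply HF. apply box_upd; auto.
Qed.

Lemma Cmod_csum_f n : forall lo f,
  (Cmod (csum lo (S n) f) <= sum_f_R0 (fun k => Cmod (f (lo + k)%nat)) n)%R.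
Proof.
  induction n; intros lo f.
  - rewrite csum_Sl, csum_0. simpl. rewrite Nat.add_0_r. rewrite Cplus_0_r. lra.
  - rewrite csum_Sr. simpl sum_f_R0. eapply Rle_trans. apply Cmod_triangle.
    specialize (IHn lo f). replace (lo + S n)%nat with (lo + S n)%nat by lia. lra.
Qed.

Lemma is_series_C_unique (a : nat -> C) (l1 l2 : C) : is_series a l1 -> is_series a l2 -> l1 = l2.
Proof.
  intros H1 H2. apply (@filterlim_locally_unique _ C_AbsRing C_NormedModule _ _ (sum_n a) l1 l2 H1 H2).
Qed.

Lemma ex_series_C_abs (a : nat -> C) : ex_series (fun n => Cmod (a n)) -> ex_series a.
Proof.
  intros H. apply (@ex_series_le C_AbsRing C_CompleteNormedModule a (fun n => Cmod (a n))).
  intros n. right. reflexivity. exact H.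
Qed.

Lemma lem_div1 (s b u : C) : 1 - u <> 0 -> s - u * s = b -> s = b / (1 - u).
Proof. intros H E. rewrite <- E. field. exact H. Qed.

Lemma geo_series (u : C) (b : nat -> C) (beta : C) :
  (Cmod u < 1)%R -> is_series (fun n => u ^ n * b (S n)) beta ->
  ex_series (fun n => Cmod (u ^ n * b (S n))) ->
  is_series (fun n => u ^ n * csum 1 (S n) b) (beta / (1 - u)) /\
  ex_series (fun n => Cmod (u ^ n * csum 1 (S n) b)).
Proof.
  intros Hu Hb [Sa HSa].
  assert (Habs : ex_series (fun n => Cmod (u ^ n * csum 1 (S n) b))).
  { assert (Hg : is_series (fun m => Cmod u ^ m)%R (/ (1 - Cmod u))%R).
    { apply is_series_geom. rewrite Rabs_right. exact Hu. apply Rle_ge, Cmod_ge_0. }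
    assert (Hm := is_series_mult_pos _ _ _ _ HSa Hg (fun n => Cmod_ge_0 _) (fun n => pow_le _ n (Cmod_ge_0 u))).
    apply (@ex_series_le R_AbsRing R_CompleteNormedModule _
       (fun n => sum_f_R0 (fun k => Cmod (u ^ k * b (S k)) * Cmod u ^ (n - k))%R n)); [|eexists; exact Hm].
    intros n. cbv beta. unfold norm; simpl; unfold abs; simpl. rewrite Rabs_right by (apply Rle_ge, Cmod_ge_0).
    rewrite Cmod_mult, Cmod_pow.
    eapply Rle_trans. apply Rmult_le_compat_l. apply pow_le, Cmod_ge_0. apply Cmod_csum_f.
    rewrite scal_sum. right. apply sum_eq. intros k Hk.
    rewrite Cmod_mult, Cmod_pow. replace (Cmod u ^ n)%R with (Cmod u ^ k * Cmod u ^ (n - k))%R.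
    replace (1 + k)%nat with (S k) by lia. ring.
    rewrite <- pow_add. f_equal. lia. }
  split; [|exact Habs].
  destruct (ex_series_C_abs _ Habs) as [sig Hsig].
  set (g := fun n => u ^ n * csum 1 (S n) b) in *.
  set (gs := fun n => match n with O => RtoC 0 | S n' => g n' end).
  assert (Hgs : is_series gs sig).
  { apply is_series_decr_1. unfold gs.
    match goal with |- is_series _ ?q => replace q with sig end. exact Hsig.
    unfold plus, opp; simpl. unfold RtoC. destruct sig; simpl. unfold Cplus, Copp. simpl. f_equal; ring. }
  assert (Hd := is_series_minus _ _ _ _ Hsig (@is_series_scal C_AbsRing C_NormedModule u _ _ Hgs)).
  assert (Hd' : is_series (fun n => u ^ n * b (S n)) (sig - u * sig)).
  { eapply is_series_ext; [|exact Hd]. intros n. unfold gs, g. destruct n.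
    - unfold plus, opp, scal; simpl. unfold mult; simpl.
      rewrite csum_Sl, csum_0. ring.
    - unfold plus, opp, scal; simpl. unfold mult; simpl.
      rewrite (csum_Sr 1 (S n)). replace (1 + S n)%nat with (S (S n)) by lia. ring. }
  assert (E := is_series_C_unique _ _ _ Hd' Hb).
  assert (Hu1 : 1 - u <> 0).
  { intros H. assert (u = 1) by (replace u with (1 - (1 - u)) by ring; rewrite H; ring).
    subst u. rewrite Cmod_1 in Hu. lra. }
  replace (beta / (1 - u)) with sig. exact Hsig.
  apply lem_div1; auto.
Qed.

Definition Aker (t : nat) (a : nat -> C) (K : nat) : C :=
  csum 1 K (fun K' => RtoC (INR (poch (K - K' + 1) t)) * a K').

Lemma poch_pascal n t : poch (S n) (S t) = (poch n (S t) + S t * poch (S n) t)%nat.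
Proof.
  rewrite (poch_Sl t n). change (poch (S n) (S t)) with (poch (S n) t * (S n + t))%nat. lia.
Qed.

Lemma Aker_rec t a K : Aker (S t) a K = csum 1 K (fun K'' => RtoC (INR (S t)) * Aker t a K'').
Proof.
  induction K.
  - reflexivity.
  - rewrite (csum_Sr 1 K), <- IHK. unfold Aker.
    rewrite (csum_Sr 1 K (fun K' => RtoC (INR (poch (S K - K' + 1) (S t))) * a K')).
    change (csum 1 (1 + K)) with (csum 1 (S K)).
    rewrite (csum_Sr 1 K (fun K' => RtoC (INR (poch (1 + K - K' + 1) t)) * a K')).
    rewrite (csum_ext K 1 (fun K' => RtoC (INR (poch (S K - K' + 1) (S t))) * a K')
      (fun K' => RtoC (INR (poch (K - K' + 1) (S t))) * a K' + RtoC (INR (S t)) * (RtoC (INR (poch (1 + K - K' + 1) t)) * a K'))).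
    + rewrite csum_plus, csum_scal.
      replace (S K - (1 + K) + 1)%nat with 1%nat by lia.
      replace (1 + K - (1 + K) + 1)%nat with 1%nat by lia.
      change (poch 1 (S t)) with (poch 1 t * (1 + t))%nat.
      rewrite mult_INR, RtoC_mult, plus_INR, RtoC_plus. rewrite (S_INR t), RtoC_plus. simpl (INR 1).
      ring.
    + intros i Hi. replace (S K - i + 1)%nat with (S (K - i + 1)) by lia.
      replace (1 + K - i + 1)%nat with (S (K - i + 1)) by lia.
      rewrite poch_pascal, plus_INR, mult_INR, RtoC_plus, RtoC_mult. ring.
Qed.

Lemma is_series_Cscal (c : C) (a : nat -> C) (l : C) :
  is_series a l -> is_series (fun n => c * a n) (c * l).
Proof. intros H. exact (@is_series_scal C_AbsRing C_NormedModule c a l H). Qed.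

Lemma ex_series_Cmod_scal (c : C) (a : nat -> C) :
  ex_series (fun n => Cmod (a n)) -> ex_series (fun n => Cmod (c * a n)).
Proof.
  intros [l H]. exists (Cmod c * l)%R.
  eapply is_series_ext; [|exact (@is_series_scal R_AbsRing R_NormedModule (Cmod c) _ _ H)].
  intros n. unfold scal; simpl. unfold mult; simpl. rewrite Cmod_mult. reflexivity.
Qed.

Lemma Cmult_swap3 (c x y : C) : c * (x * y) = x * (c * y).
Proof. ring. Qed.

Lemma one_minus_nz (u : C) : (Cmod u < 1)%R -> 1 - u <> 0.
Proof.
  intros Hu H. assert (u = 1) by (replace u with (1 - (1 - u)) by ring; rewrite H; ring).
  subst u. rewrite Cmod_1 in Hu. lra.
Qed.

Lemma kernel_series t : forall u a alpha, (Cmod u < 1)%R ->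
  is_series (fun n => u ^ n * a (S n)) alpha ->
  ex_series (fun n => Cmod (u ^ n * a (S n))) ->
  is_series (fun n => u ^ n * Aker t a (S n)) (RtoC (INR (fact t)) * alpha / (1 - u) ^ (S t)) /\
  ex_series (fun n => Cmod (u ^ n * Aker t a (S n))).
Proof.
  assert (Hpow : forall u n, (Cmod u < 1)%R -> (1 - u) ^ n <> 0).
  { intros u n Hu. apply Cpow_nz. apply one_minus_nz; auto. }
  induction t; intros u a alpha Hu Ha Hab.
  - assert (E : forall n, Aker 0 a (S n) = csum 1 (S n) a).
    { intros n. unfold Aker. apply csum_ext. intros i _. simpl. rewrite Cmult_1_l. reflexivity. }
    destruct (geo_series u a alpha Hu Ha Hab) as [G1 G2].
    split.
    + eapply is_series_ext; [|replace (RtoC (INR (fact 0)) * alpha / (1 - u) ^ 1) with (alpha / (1 - u)); [exact G1|]].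
      intros n. rewrite E. reflexivity.
      simpl. field. apply one_minus_nz; auto.
    + eapply ex_series_ext; [|exact G2]. intros n. rewrite E. reflexivity.
  - destruct (IHt u a alpha Hu Ha Hab) as [I1 I2].
    set (b := fun K => RtoC (INR (S t)) * Aker t a K).
    assert (B1 : is_series (fun n => u ^ n * b (S n)) (RtoC (INR (S t)) * (RtoC (INR (fact t)) * alpha / (1 - u) ^ S t))).
    { eapply is_series_ext; [|exact (is_series_Cscal (RtoC (INR (S t))) _ _ I1)].
      intros n. unfold b. exact (Cmult_swap3 _ _ _). }
    assert (B2 : ex_series (fun n => Cmod (u ^ n * b (S n)))).
    { eapply ex_series_ext; [|exact (ex_series_Cmod_scal (RtoC (INR (S t))) _ I2)].
      intros n. unfold b. rewrite (Cmult_swap3 (RtoC (INR (S t)))). reflexivity. }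
    destruct (geo_series u b _ Hu B1 B2) as [G1 G2].
    assert (E : forall n, Aker (S t) a (S n) = csum 1 (S n) b).
    { intros n. rewrite Aker_rec. reflexivity. }
    split.
    + eapply is_series_ext; [|match goal with |- is_series _ ?q => replace q with (RtoC (INR (S t)) * (RtoC (INR (fact t)) * alpha / (1 - u) ^ S t) / (1 - u)); [exact G1|] end].
      intros n. rewrite E. reflexivity.
      change (fact (S t)) with (S t * fact t)%nat. rewrite mult_INR, RtoC_mult.
      rewrite (Cpow_S (1 - u) (S t)). field. split. apply Hpow; auto. apply one_minus_nz; auto.
    + eapply ex_series_ext; [|exact G2]. intros n. rewrite E. reflexivity.
Qed.

Lemma is_series_first_C (a : nat -> C) : (forall n, a (S n) = 0) -> is_series a (a 0%nat).
Proof.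
  intros H. apply is_series_decr_1.
  match goal with |- is_series _ ?q => replace q with (@zero C_AbelianGroup) end.
  - unfold is_series. eapply filterlim_ext.
    2: apply (filterlim_const (F := eventually) (@zero C_AbelianGroup)).
    intros n. simpl. symmetry.
    transitivity (@sum_n C_AbelianMonoid (fun _ => zero) n).
    + unfold sum_n. apply sum_n_m_ext. intros k. rewrite H. reflexivity.
    + unfold sum_n. rewrite sum_n_m_const_zero. reflexivity.
  - symmetry. exact (@plus_opp_r C_AbelianGroup (a 0%nat)).
Qed.

Lemma is_series_first_R (a : nat -> R) : (forall n, a (S n) = 0%R) -> is_series a (a 0%nat).
Proof.
  intros H. apply is_series_decr_1.
  match goal with |- is_series _ ?q => replace q with (@zero R_AbelianGroup) end.
  - unfold is_series. eapply filterlim_ext.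
    2: apply (filterlim_const (F := eventually) (@zero R_AbelianGroup)).
    intros n. simpl. symmetry.
    transitivity (@sum_n R_AbelianMonoid (fun _ => zero) n).
    + unfold sum_n. apply sum_n_m_ext. intros k. rewrite H. reflexivity.
    + unfold sum_n. rewrite sum_n_m_const_zero. reflexivity.
  - symmetry. exact (@plus_opp_r R_AbelianGroup (a 0%nat)).
Qed.

Definition delta (K : nat) : C := if Nat.eqb K 1 then 1 else 0.

Lemma Aker_delta t n : Aker t delta (S n) = RtoC (INR (poch (S n - 1 + 1) t)).
Proof.
  unfold Aker. rewrite csum_Sl.
  rewrite (csum_ext n 2 _ (fun K' => 0 * RtoC (INR (poch (S n - K' + 1) t)))).
  - rewrite csum_scal. unfold delta. simpl Nat.eqb. cbv iota. ring.
  - intros i Hi. unfold delta. destruct (Nat.eqb_spec i 1). lia. ring.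
Qed.

Fixpoint atail (t : nat -> nat) (B X : nat -> C) (m j K : nat) : C :=
  match m with
  | O => RtoC (INR (poch (K - 1 + 1) (t j))) * (B j * X j ^ (K - 1))
  | S m' => csum 1 K (fun K' => RtoC (INR (poch (K - K' + 1) (t j))) * (B j * X j ^ (K - 1))
                                * atail t B X m' (S j) K')
  end.

Definition genF (t : nat -> nat) (B X : nat -> C) (w : C) (j m : nat) : C :=
  cprod j (S m) (fun i => RtoC (INR (fact (t i))) * B i / (1 - w * cprod j (i - j + 1) X) ^ (S (t i))).

Lemma delta_series (u : C) : is_series (fun n => u ^ n * delta (S n)) (RtoC 1) /\
   ex_series (fun n => Cmod (u ^ n * delta (S n))).
Proof.
  split.
  - match goal with |- is_series ?a _ => replace (RtoC 1) with (a 0%nat) end.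
    apply is_series_first_C. intros n. unfold delta. simpl. ring.
    unfold delta. simpl. ring.
  - eexists. apply is_series_first_R. intros n. unfold delta. simpl.
    rewrite Cmult_0_r. apply Cmod_0.
Qed.

Lemma atail_gen t B X m : forall j w, (Cmod w < 1)%R -> (forall i, (Cmod (X i) <= 1)%R) ->
  is_series (fun n => w ^ n * atail t B X m j (S n)) (genF t B X w j m) /\
  ex_series (fun n => Cmod (w ^ n * atail t B X m j (S n))).
Proof.
  intros j w Hw HX. revert j w Hw.
  induction m; intros j w Hw.
  - assert (Hu : (Cmod (w * X j) < 1)%R).
    { rewrite Cmod_mult. specialize (HX j). assert (0 <= Cmod w)%R by apply Cmod_ge_0. nra. }
    destruct (delta_series (w * X j)) as [D1 D2].
    destruct (kernel_series (t j) _ _ _ Hu D1 D2) as [K1 K2].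
    assert (E : forall n, w ^ n * atail t B X 0 j (S n) = B j * ((w * X j) ^ n * Aker (t j) delta (S n))).
    { intros n. rewrite Aker_delta. simpl atail. replace (n - 0)%nat with n by lia.
      rewrite Cpow_mult_l. replace (S n - 1 + 1)%nat with (n + 1)%nat by lia. ring. }
    split.
    + eapply is_series_ext. intros n. symmetry. apply E.
      match goal with |- is_series _ ?q => replace q with (B j * (RtoC (INR (fact (t j))) * 1 / (1 - w * X j) ^ S (t j))) end.
      apply is_series_Cscal. exact K1.
      unfold genF. rewrite cprod_Sl, cprod_0. replace (j - j + 1)%nat with 1%nat by lia.
      rewrite cprod_Sl, cprod_0. rewrite !Cmult_1_r. unfold Cdiv. ring.
    + apply (ex_series_ext (fun n => Cmod (B j * ((w * X j) ^ n * Aker (t j) delta (S n))))).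
      intros n. rewrite E. reflexivity.
      apply ex_series_Cmod_scal. exact K2.
  - assert (Hu : (Cmod (w * X j) < 1)%R).
    { rewrite Cmod_mult. specialize (HX j). assert (0 <= Cmod w)%R by apply Cmod_ge_0. nra. }
    destruct (IHm (S j) (w * X j) Hu) as [I1 I2].
    destruct (kernel_series (t j) _ _ _ Hu I1 I2) as [K1 K2].
    assert (E : forall n, w ^ n * atail t B X (S m) j (S n) =
                B j * ((w * X j) ^ n * Aker (t j) (atail t B X m (S j)) (S n))).
    { intros n. change (atail t B X (S m) j (S n)) with
        (csum 1 (S n) (fun K' => RtoC (INR (poch (S n - K' + 1) (t j))) * (B j * X j ^ (S n - 1))
                                * atail t B X m (S j) K')).
      rewrite (csum_ext (S n) 1 _ (fun K' => (B j * X j ^ n) *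
          (RtoC (INR (poch (S n - K' + 1) (t j))) * atail t B X m (S j) K'))).
      rewrite csum_scal. unfold Aker. rewrite Cpow_mult_l. ring.
      intros i Hi. replace (S n - 1)%nat with n by lia. ring. }
    split.
    + eapply is_series_ext. intros n. symmetry. apply E.
      match goal with |- is_series _ ?q => replace q with (B j * (RtoC (INR (fact (t j))) * genF t B X (w * X j) (S j) m / (1 - w * X j) ^ S (t j))) end.
      apply is_series_Cscal. exact K1.
      symmetry. unfold genF. rewrite (cprod_Sl j (S m)). replace (j - j + 1)%nat with 1%nat by lia.
      rewrite (cprod_Sl j 0 X), cprod_0, Cmult_1_r.
      rewrite (cprod_ext (S m) (S j) (fun i => RtoC (INR (fact (t i))) * B i / (1 - w * cprod j (i - j + 1) X) ^ S (t i))
         (fun i => RtoC (INR (fact (t i))) * B i / (1 - w * X j * cprod (S j) (i - S j + 1) X) ^ S (t i))).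
      unfold Cdiv. ring.
      intros i Hi. replace (i - j + 1)%nat with (S (i - S j + 1)) by lia.
      rewrite cprod_Sl. rewrite Cmult_assoc. reflexivity.
    + apply (ex_series_ext (fun n => Cmod (B j * ((w * X j) ^ n * Aker (t j) (atail t B X m (S j)) (S n))))).
      intros n. rewrite E. reflexivity.
      apply ex_series_Cmod_scal. exact K2.
Qed.

Definition rsum (lo n : nat) (f : nat -> R) : R := fold_right Rplus 0%R (map f (seq lo n)).

Fixpoint atailR (t : nat -> nat) (m j K : nat) : R :=
  match m with
  | O => INR (poch (K - 1 + 1) (t j))
  | S m' => rsum 1 K (fun K' => INR (poch (K - K' + 1) (t j)) * atailR t m' (S j) K')%R
  end.

Lemma csum_RtoC n : forall lo f, csum lo n (fun i => RtoC (f i)) = RtoC (rsum lo n f).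
Proof.
  induction n; intros lo f. reflexivity.
  rewrite csum_Sl, IHn. unfold rsum. simpl. rewrite RtoC_plus. reflexivity.
Qed.

Lemma rsum_le n : forall lo f g, (forall i, (lo <= i < lo + n)%nat -> (f i <= g i)%R) ->
  (rsum lo n f <= rsum lo n g)%R.
Proof.
  induction n; intros lo f g H. unfold rsum; simpl; lra.
  unfold rsum; simpl. apply Rplus_le_compat. apply H; lia. apply IHn. intros; apply H; lia.
Qed.

Lemma atail_one t m : forall j K, atail t (fun _ => 1) (fun _ => 1) m j K = RtoC (atailR t m j K).
Proof.
  induction m; intros j K.
  - simpl. rewrite Cpow_1_l. ring.
  - simpl atail. simpl atailR. rewrite <- csum_RtoC. apply csum_ext. intros i _.
    rewrite IHm, Cpow_1_l, RtoC_mult. ring.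
Qed.

Lemma atail_bound t B X m : (forall i, (Cmod (B i) <= 1)%R) -> (forall i, (Cmod (X i) <= 1)%R) ->
  forall j K, (Cmod (atail t B X m j K) <= atailR t m j K)%R.
Proof.
  intros HB HX. induction m; intros j K.
  - simpl. rewrite !Cmod_mult, Cmod_R, Cmod_pow, Rabs_right by (apply Rle_ge, pos_INR).
    assert (0 <= Cmod (B j))%R by apply Cmod_ge_0.
    assert (0 <= Cmod (X j) ^ (K - 1) <= 1)%R.
    { apply pow_le_one. split. apply Cmod_ge_0. apply HX. }
    assert (0 <= INR (poch (K - 1 + 1) (t j)))%R by apply pos_INR.
    specialize (HB j).
    assert (Cmod (B j) * Cmod (X j) ^ (K - 1) <= 1)%R by nra.
    assert (0 <= Cmod (B j) * Cmod (X j) ^ (K - 1))%R by nra.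
    nra.
  - simpl atail. simpl atailR. eapply Rle_trans. apply Cmod_csum.
    apply rsum_le. intros i _.
    rewrite !Cmod_mult, Cmod_R, Cmod_pow, Rabs_right by (apply Rle_ge, pos_INR).
    assert (0 <= Cmod (B j))%R by apply Cmod_ge_0.
    assert (0 <= Cmod (X j) ^ (K - 1) <= 1)%R.
    { apply pow_le_one. split. apply Cmod_ge_0. apply HX. }
    assert (0 <= INR (poch (K - i + 1) (t j)))%R by apply pos_INR.
    assert (0 <= Cmod (atail t B X m (S j) i))%R by apply Cmod_ge_0.
    specialize (IHm (S j) i). specialize (HB j).
    assert (Cmod (B j) * Cmod (X j) ^ (K - 1) <= 1)%R by nra.
    assert (0 <= Cmod (B j) * Cmod (X j) ^ (K - 1))%R by nra.
    rewrite Rmult_assoc. apply Rmult_le_compat_l. exact H1.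
    assert (Cmod (B j) * Cmod (X j) ^ (K - 1) * Cmod (atail t B X m (S j) i) <= Cmod (atail t B X m (S j) i))%R by nra.
    lra.
Qed.

Definition Bx (d r s : nat -> nat) (x : nat -> R) (j : nat) : C :=
  cprod (S (d (j - 1)%nat)) (d j - d (j - 1))%nat
    (fun l => Cpow (RtoC (x l)) (r j) * Cpow (RtoC (1 - x l)%R) (s j)).
Definition Xx (d : nat -> nat) (x : nat -> R) (j : nat) : C :=
  cprod (S (d (j - 1)%nat)) (d j - d (j - 1))%nat (fun l => RtoC (x l)).
Definition phiB (r s : nat -> nat) (j K : nat) (y : R) : C :=
  RtoC (y ^ (K - 1 + r j) * (1 - y) ^ (s j))%R.
Definition betaB (r s : nat -> nat) (j K : nat) : C :=
  RtoC (INR (fact (s j)) / INR (poch (S (K - 1 + r j)) (S (s j))))%R.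

Lemma block_eq d r s x j K :
  Bx d r s x j * Xx d x j ^ (K - 1) =
  cprod (S (d (j - 1)%nat)) (d j - d (j - 1))%nat (fun l => phiB r s j K (x l)).
Proof.
  unfold Bx, Xx. rewrite <- cprod_pow, <- cprod_mult. apply cprod_ext. intros i _.
  unfold phiB. rewrite RtoC_mult, <- !RtoC_pow, pow_add, RtoC_mult. ring.
Qed.

Lemma cprod_split_if a b (f g : nat -> C) :
  cprod 1 (a + b) (fun l => if Nat.leb l a then f l else g l) = cprod 1 a f * cprod (S a) b g.
Proof.
  rewrite cprod_add. f_equal.
  - apply cprod_ext. intros i Hi. destruct (Nat.leb_spec i a). reflexivity. lia.
  - apply cprod_ext. intros i Hi. destruct (Nat.leb_spec i a). lia. reflexivity.
Qed.

Lemma Cpow_div (a b : C) n : b <> 0 -> (a / b) ^ n = a ^ n / b ^ n.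
Proof.
  intros Hb. unfold Cdiv. rewrite Cpow_mult_l, Cpow_inv by auto. reflexivity.
Qed.

Lemma INR_poch_nz a m : (0 < a)%nat -> RtoC (INR (poch a m)) <> 0.
Proof.
  intros Ha E. apply RtoC_inj in E. apply (INR_eq _ 0) in E. pose proof (poch_pos m a Ha). lia.
Qed.

Lemma prefix_ext (d r s : nat -> nat) j K (phi : nat -> R -> C) (Iv : nat -> C) :
  (d (j - 1)%nat <= d j)%nat ->
  (forall l, (1 <= l <= d (j - 1)%nat)%nat -> @is_RInt C_R_NormedModule (phi l) 0 1 (Iv l)) ->
  exists phi' Iv',
  (forall l, (1 <= l <= d j)%nat -> @is_RInt C_R_NormedModule (phi' l) 0 1 (Iv' l)) /\
  (forall x, cprod 1 (d j) (fun l => phi' l (x l)) =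
     cprod 1 (d (j - 1)%nat) (fun l => phi l (x l)) * (Bx d r s x j * Xx d x j ^ (K - 1))) /\
  cprod 1 (d j) Iv' = cprod 1 (d (j - 1)%nat) Iv * Cpow (betaB r s j K) (d j - d (j - 1))%nat.
Proof.
  intros Hle HI.
  exists (fun l => if Nat.leb l (d (j - 1)%nat) then phi l else phiB r s j K).
  exists (fun l => if Nat.leb l (d (j - 1)%nat) then Iv l else betaB r s j K).
  assert (hd : d j = (d (j - 1)%nat + (d j - d (j - 1)))%nat) by lia.
  split; [|split].
  - intros l Hl. destruct (Nat.leb_spec l (d (j - 1)%nat)).
    + apply HI. lia.
    + apply beta_C.
  - intros x. rewrite block_eq.
    rewrite <- (cprod_split_if (d (j - 1)%nat) (d j - d (j - 1))%nat (fun l => phi l (x l)) (fun l => phiB r s j K (x l))).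
    rewrite <- hd. apply cprod_ext. intros i _. destruct (Nat.leb i (d (j - 1)%nat)); reflexivity.
  - rewrite <- (cprod_const (d j - d (j - 1))%nat (S (d (j - 1)%nat)) (betaB r s j K)).
    rewrite <- (cprod_split_if (d (j - 1)%nat) (d j - d (j - 1))%nat Iv (fun _ => betaB r s j K)).
    rewrite <- hd. reflexivity.
Qed.

Lemma iint_atail (D p : nat) (d r s t : nat -> nat)
  (Hmono : forall j, (1 <= j <= p)%nat -> (d (j - 1)%nat < d j)%nat) (HD : d p = D) :
  forall m j K c (phi : nat -> R -> C) (Iv : nat -> C),
  (j + m = p)%nat -> (1 <= j)%nat -> (1 <= K)%nat ->
  (forall l, (1 <= l <= d (j - 1)%nat)%nat -> @is_RInt C_R_NormedModule (phi l) 0 1 (Iv l)) ->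
  Good D (fun x => c * cprod 1 (d (j - 1)%nat) (fun l => phi l (x l)) * atail t (Bx d r s x) (Xx d x) m j K) /\
  iint D (fun x => c * cprod 1 (d (j - 1)%nat) (fun l => phi l (x l)) * atail t (Bx d r s x) (Xx d x) m j K) =
    c * cprod 1 (d (j - 1)%nat) Iv * cprod j (S m) (fun i => Cpow (RtoC (INR (fact (s i)))) (d i - d (i - 1))%nat)
      * tail_sum d r s t m j K.
Proof.
  induction m; intros j K c phi Iv Hjm Hj HK HI.
  -
    rewrite Nat.add_0_r in Hjm. subst p. subst D.
    assert (Hlt : (d (j - 1)%nat < d j)%nat) by (apply Hmono; lia).
    destruct (prefix_ext d r s j K phi Iv (Nat.lt_le_incl _ _ Hlt) HI) as [phi' [Iv' [H1 [H2 H3]]]].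
    destruct (iint_mono (d j) phi' Iv' (c * RtoC (INR (poch (K - 1 + 1) (t j))))
       (fun x => c * cprod 1 (d (j - 1)%nat) (fun l => phi l (x l)) * atail t (Bx d r s x) (Xx d x) 0 j K)) as [G1 G2].
    + exact H1.
    + intros x _. simpl atail. rewrite H2. ring.
    + split. exact G1. rewrite G2, H3.
      simpl tail_sum. unfold sfactor, betaB.
      replace (S (K - 1 + r j)) with (K + r j)%nat by lia.
      assert (Q : INR (poch (K + r j) (S (s j))) <> 0%R).
      { apply not_0_INR. pose proof (poch_pos (S (s j)) (K + r j) ltac:(lia)). lia. }
      assert (Q' : RtoC (INR (poch (K + r j) (S (s j)))) <> 0).
      { intros E. apply Q. apply RtoC_inj. exact E. }
      rewrite RtoC_div by exact Q. rewrite Cpow_div by exact Q'.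
      rewrite cprod_Sl, cprod_0.
      field. apply Cpow_nz. exact Q'.
  - assert (Hlt : (d (j - 1)%nat < d j)%nat) by (apply Hmono; lia).
    destruct (prefix_ext d r s j K phi Iv (Nat.lt_le_incl _ _ Hlt) HI) as [phi' [Iv' [H1 [H2 H3]]]].
    set (Fk := fun K' (x : nat -> R) => (c * RtoC (INR (poch (K - K' + 1) (t j))))
                 * cprod 1 (d (S j - 1)%nat) (fun l => phi' l (x l)) * atail t (Bx d r s x) (Xx d x) m (S j) K').
    assert (IH : forall k, (1 <= k < 1 + K)%nat ->
       Good D (Fk k) /\ iint D (Fk k) = (c * RtoC (INR (poch (K - k + 1) (t j)))) * cprod 1 (d (S j - 1)%nat) Iv'
          * cprod (S j) (S m) (fun i => Cpow (RtoC (INR (fact (s i)))) (d i - d (i - 1))%nat) * tail_sum d r s t m (S j) k).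
    { intros k Hk. apply (IHm (S j) k _ phi' Iv'); try lia. simpl. replace (j - 0)%nat with j by lia. exact H1. }
    destruct (Good_csum D K 1 Fk) as [G1 G2].
    { intros k Hk. apply (IH k Hk). }
    assert (Eq : forall x, c * cprod 1 (d (j - 1)%nat) (fun l => phi l (x l)) * atail t (Bx d r s x) (Xx d x) (S m) j K
                   = csum 1 K (fun k => Fk k x)).
    { intros x. change (atail t (Bx d r s x) (Xx d x) (S m) j K) with
        (csum 1 K (fun K' => RtoC (INR (poch (K - K' + 1) (t j))) * (Bx d r s x j * Xx d x j ^ (K - 1))
                                * atail t (Bx d r s x) (Xx d x) m (S j) K')).
      rewrite <- csum_scal. apply csum_ext. intros i _. unfold Fk.
      replace (S j - 1)%nat with j by lia. rewrite H2. ring. }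
    split.
    + eapply Good_ext; [|exact G1]. intros x _. symmetry. apply Eq.
    + rewrite (iint_ext D _ (fun x => csum 1 K (fun k => Fk k x))) by (intros; apply Eq).
      rewrite G2. rewrite (csum_ext K 1 _ _ (fun k Hk => proj2 (IH k Hk))).
      change (tail_sum d r s t (S m) j K) with
        (csum 1 K (fun K' => sfactor d r s t j K K' * tail_sum d r s t m (S j) K')).
      rewrite <- csum_scal. apply csum_ext. intros i Hi.
      replace (S j - 1)%nat with j by lia. rewrite H3.
      rewrite (cprod_Sl j (S m)).
      unfold sfactor, betaB.
      replace (S (K - 1 + r j)) with (K + r j)%nat by lia.
      assert (Q : INR (poch (K + r j) (S (s j))) <> 0%R).
      { apply not_0_INR. pose proof (poch_pos (S (s j)) (K + r j) ltac:(lia)). lia. }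
      assert (Q' : RtoC (INR (poch (K + r j) (S (s j)))) <> 0).
      { intros E. apply Q. apply RtoC_inj. exact E. }
      rewrite RtoC_div by exact Q. rewrite Cpow_div by exact Q'.
      field. apply Cpow_nz. exact Q'.
Qed.

Lemma Cmod_cprod_le1 n : forall lo f, (forall i, (Cmod (f i) <= 1)%R) -> (Cmod (cprod lo n f) <= 1)%R.
Proof.
  induction n; intros lo f H. rewrite cprod_0, Cmod_1. lra.
  rewrite cprod_Sl, Cmod_mult. specialize (IHn (S lo) f H). specialize (H lo).
  assert (0 <= Cmod (f lo))%R by apply Cmod_ge_0.
  assert (0 <= Cmod (cprod (S lo) n f))%R by apply Cmod_ge_0. nra.
Qed.

Lemma cprod_nz n : forall lo (f : nat -> C), (forall i, (lo <= i < lo + n)%nat -> f i <> 0) -> cprod lo n f <> 0.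
Proof.
  induction n; intros lo f H. rewrite cprod_0. apply C1_nz.
  rewrite cprod_Sl. apply Cmult_neq_0. apply H; lia. apply IHn. intros; apply H; lia.
Qed.

Lemma cprod_pow_sum (w : C) (t : nat -> nat) n : forall lo,
  cprod lo n (fun j => Cpow w (S (t j))) = Cpow w (fold_right Nat.add 0%nat (map t (seq lo n)) + n).
Proof.
  induction n; intros lo. reflexivity.
  rewrite cprod_Sl, IHn.
  change (fold_right Nat.add 0%nat (map t (seq lo (S n)))) with
    (t lo + fold_right Nat.add 0%nat (map t (seq (S lo) n)))%nat.
  rewrite <- Cpow_add_r. f_equal. lia.
Qed.

Lemma cprod_X_blocks (p : nat) (d : nat -> nat) (x : nat -> R) :
  d 0%nat = 0%nat -> (forall j, (1 <= j <= p)%nat -> (d (j - 1)%nat < d j)%nat) ->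
  forall i, (i <= p)%nat -> cprod 1 i (Xx d x) = xprod x (d i).
Proof.
  intros Hd0 Hm. induction i; intros Hi.
  - unfold xprod. rewrite Hd0. reflexivity.
  - rewrite cprod_Sr, IHi by lia. unfold xprod, Xx.
    assert (H := Hm (S i) ltac:(lia)).
    assert (E : (S i - 1 = i)%nat) by lia. rewrite E in H.
    replace (1 + i - 1)%nat with i by lia. replace (1 + i)%nat with (S i) by lia.
    replace (d (S i)) with (d i + (d (S i) - d i))%nat at 2 by lia.
    rewrite cprod_add. reflexivity.
Qed.

Lemma Cmod_le1_pow_prod (y : R) r0 s0 : (0 <= y <= 1)%R ->
  (Cmod (Cpow (RtoC y) r0 * Cpow (RtoC (1 - y)%R) s0) <= 1)%R.
Proof.
  intros Hy. rewrite Cmod_mult, !Cmod_pow, !Cmod_R.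
  rewrite !Rabs_right by lra.
  assert (A := pow_le_one y r0 Hy). assert (B := pow_le_one (1 - y) s0 ltac:(lra)). nra.
Qed.

Lemma term_eq (B P z c : C) (tt : nat) : z <> 0 -> 1 - / z * P <> 0 -> c <> 0 ->
  B / (z - P) ^ (S tt) = (/ z) ^ (S tt) * (/ c * (c * B / (1 - / z * P) ^ (S tt))).
Proof.
  intros Hz H1 Hc.
  replace (z - P) with (z * (1 - / z * P)) by (field; exact Hz).
  rewrite Cpow_mult_l, Cpow_inv by exact Hz.
  field. split; [|split]; auto; apply Cpow_nz; auto.
Qed.

Lemma fact_C_nz n : RtoC (INR (fact n)) <> 0.
Proof. intros E. apply RtoC_inj in E. apply (fact_neq_0 n). apply INR_eq. exact E. Qed.

Lemma integrand_eq (p : nat) (d r s t : nat -> nat) (z : C) (x : nat -> R) :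
  (1 <= p)%nat -> d 0%nat = 0%nat ->
  (forall j, (1 <= j <= p)%nat -> (d (j - 1)%nat < d j)%nat) ->
  (forall l, (0 <= x l <= 1)%R) -> z <> 0 -> (Cmod (/ z) < 1)%R ->
  (/ Cpow z (fold_right Nat.add 0%nat (map t (seq 1 p)) + p - 1)
      * cprod 1 p (fun j => Cpow (RtoC (INR (fact (s j)))) (d j - d (j - 1))%nat
                            / RtoC (INR (fact (t j))))
   / cprod 1 p (fun j => Cpow (RtoC (INR (fact (s j)))) (d j - d (j - 1))%nat) * / z)
  * genF t (Bx d r s x) (Xx d x) (/ z) 1 (p - 1) = integrand p d r s t z x.
Proof.
  intros Hp Hd0 Hm Hx Hz Hw.
  set (w := / z) in *.
  assert (HP : forall i, (1 <= i <= p)%nat -> 1 - w * xprod x (d i) <> 0).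
  { intros i Hi. apply one_minus_nz. rewrite Cmod_mult.
    assert (Cmod (xprod x (d i)) <= 1)%R.
    { unfold xprod. apply Cmod_cprod_le1. intros l. rewrite Cmod_R. rewrite Rabs_right by (apply Rle_ge, Hx). apply Hx. }
    assert (0 <= Cmod w)%R by apply Cmod_ge_0. nra. }
  set (g := fun i => RtoC (INR (fact (t i))) * Bx d r s x i / (1 - w * xprod x (d i)) ^ S (t i)).
  assert (HG : genF t (Bx d r s x) (Xx d x) w 1 (p - 1) = cprod 1 p g).
  { unfold genF. replace (S (p - 1)) with p by lia. apply cprod_ext. intros i Hi.
    unfold g. replace (i - 1 + 1)%nat with i by lia. rewrite (cprod_X_blocks p d x Hd0 Hm i) by lia.
    reflexivity. }
  assert (HI : integrand p d r s t z x =
     cprod 1 p (fun j => w ^ S (t j)) * (cprod 1 p (fun j => / RtoC (INR (fact (t j)))) * cprod 1 p g)).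
  { rewrite <- !cprod_mult. unfold integrand. apply cprod_ext. intros i Hi.
    unfold g. fold (Bx d r s x i). apply term_eq; auto. apply HP. lia. apply fact_C_nz. }
  rewrite HI, HG, cprod_pow_sum. fold w.
  assert (HE : cprod 1 p (fun j => Cpow (RtoC (INR (fact (s j)))) (d j - d (j - 1))%nat) <> 0).
  { apply cprod_nz. intros i _. apply Cpow_nz. apply fact_C_nz. }
  rewrite (cprod_ext p 1 (fun j => Cpow (RtoC (INR (fact (s j)))) (d j - d (j - 1))%nat / RtoC (INR (fact (t j))))
      (fun j => Cpow (RtoC (INR (fact (s j)))) (d j - d (j - 1))%nat * / RtoC (INR (fact (t j))))) by reflexivity.
  rewrite cprod_mult.
  rewrite <- Cpow_inv by exact Hz. fold w.
  replace (fold_right Nat.add 0%nat (map t (seq 1 p)) + p)%nat with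
    (S (fold_right Nat.add 0%nat (map t (seq 1 p)) + p - 1)) by lia.
  replace (S (fold_right Nat.add 0%nat (map t (seq 1 p)) + p - 1) - 1)%nat with
     (fold_right Nat.add 0%nat (map t (seq 1 p)) + p - 1)%nat by lia.
  rewrite Cpow_S. field. exact HE.
Qed.

Lemma Cinv_nz (a : C) : a <> 0 -> / a <> 0.
Proof. intros H E. apply C1_nz. replace (RtoC 1) with (a * / a) by (field; exact H). rewrite E. ring. Qed.

Lemma assoc4 (a b c e : C) : a * ((b * c) * e) = (a * b) * (c * e).
Proof. ring. Qed.

Lemma Kinv_cancel (K a : C) : K <> 0 -> / K * (K * a) = a.
Proof. intros H. field. exact H. Qed.

Theorem proposition1 (D p : nat) (r s t d : nat -> nat) (z : C) :
  (1 <= D)%nat -> (1 <= p)%nat ->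
  d 0%nat = 0%nat ->
  (forall j, (1 <= j <= p)%nat -> (d (j - 1)%nat < d j)%nat) ->
  d p = D ->
  (1 < Cmod z)%R ->
  exists S : C,
    is_series (series_term p d r s t z) S /\
    iint D (integrand p d r s t z) =
      / Cpow z (fold_right Nat.add 0%nat (map t (seq 1 p)) + p - 1)
      * cprod 1 p (fun j => Cpow (RtoC (INR (fact (s j)))) (d j - d (j - 1))%nat
                            / RtoC (INR (fact (t j))))
      * S.
Proof.
  intros HD1 Hp Hd0 Hmono HD Hz.
  assert (Hz0 : z <> 0). { intros E. rewrite E, Cmod_0 in Hz. lra. }
  assert (Hw : (Cmod (/ z) < 1)%R).
  { rewrite Cmod_inv by exact Hz0. rewrite <- Rinv_1. apply Rinv_lt_contravar; lra. }
  set (Kc := / Cpow z (fold_right Nat.add 0%nat (map t (seq 1 p)) + p - 1)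
      * cprod 1 p (fun j => Cpow (RtoC (INR (fact (s j)))) (d j - d (j - 1))%nat
                            / RtoC (INR (fact (t j))))).
  set (E := cprod 1 p (fun j => Cpow (RtoC (INR (fact (s j)))) (d j - d (j - 1))%nat)).
  assert (HE : E <> 0).
  { apply cprod_nz. intros i _. apply Cpow_nz. apply fact_C_nz. }
  assert (HK : Kc <> 0).
  { apply Cmult_neq_0. apply Cinv_nz. apply Cpow_nz. exact Hz0.
    apply cprod_nz. intros i _. unfold Cdiv. apply Cmult_neq_0. apply Cpow_nz. apply fact_C_nz.
    apply Cinv_nz. apply fact_C_nz. }
  set (w := / z) in *.
  set (f := fun n (x : nat -> R) => (Kc / E) * (w ^ (S n) * atail t (Bx d r s x) (Xx d x) (p - 1) 1 (S n))).
  assert (SA : forall n, Good D (f n) /\ iint D (f n) = Kc * series_term p d r s t z n).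
  { intros n.
    destruct (iint_atail D p d r s t Hmono HD (p - 1) 1 (S n) ((Kc / E) * w ^ (S n))
                (fun _ _ => RtoC 0) (fun _ => RtoC 0)) as [G I]; try lia.
    { intros l Hl. simpl in Hl. rewrite Hd0 in Hl. lia. }
    assert (Ef : forall x, (Kc / E * w ^ S n) * cprod 1 (d (1 - 1)%nat) (fun l => (fun _ _ => RtoC 0) l (x l))
                  * atail t (Bx d r s x) (Xx d x) (p - 1) 1 (S n) = f n x).
    { intros x. simpl (1 - 1)%nat. rewrite Hd0, cprod_0. unfold f. ring. }
    split.
    - eapply Good_ext; [|exact G]. intros x _. apply Ef.
    - rewrite <- (iint_ext D _ _ (fun x _ => Ef x)). rewrite I.
      simpl (1 - 1)%nat. rewrite Hd0, cprod_0. replace (S (p - 1)) with p by lia. fold E.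
      unfold series_term. unfold w. rewrite Cpow_inv by exact Hz0. field.
      repeat split; try exact HE; try (apply Cpow_nz; exact Hz0). }
  set (M := fun n => (Cmod (Kc / E) * Cmod w *
              Cmod (RtoC (Cmod w) ^ n * atail t (fun _ => RtoC 1) (fun _ => RtoC 1) (p - 1) 1 (S n)))%R).
  assert (HBX : forall x, box D x -> (forall i, (Cmod (Bx d r s x i) <= 1)%R) /\ (forall i, (Cmod (Xx d x i) <= 1)%R)).
  { intros x Hx. split; intros i.
    - unfold Bx. apply Cmod_cprod_le1. intros l. apply Cmod_le1_pow_prod. apply Hx.
    - unfold Xx. apply Cmod_cprod_le1. intros l. rewrite Cmod_R, Rabs_right by (apply Rle_ge, Hx). apply Hx. }
  assert (SB1 : forall n x, box D x -> (Cmod (f n x) <= M n)%R).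
  { intros n x Hx. destruct (HBX x Hx) as [HB HX].
    assert (Ha := atail_bound t _ _ (p - 1) HB HX 1 (S n)).
    unfold f, M. rewrite atail_one.
    rewrite !Cmod_mult, !Cmod_pow, !Cmod_R. rewrite (Rabs_right (Cmod w)) by (apply Rle_ge, Cmod_ge_0).
    assert (Hb := Rle_abs (atailR t (p - 1) 1 (S n))).
    assert (0 <= Cmod (Kc / E))%R by apply Cmod_ge_0.
    assert (0 <= Cmod w)%R by apply Cmod_ge_0.
    assert (0 <= Cmod w ^ n)%R by (apply pow_le; lra).
    simpl pow. rewrite <- !Rmult_assoc. apply Rmult_le_compat_l.
    apply Rmult_le_pos; [apply Rmult_le_pos|]; lra. lra. }
  assert (SB2 : ex_series M).
  { destruct (atail_gen t (fun _ => RtoC 1) (fun _ => RtoC 1) (p - 1) 1 (RtoC (Cmod w))) as [_ Hex].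
    - rewrite Cmod_R, Rabs_right by (apply Rle_ge, Cmod_ge_0). exact Hw.
    - intros i. rewrite Cmod_1. lra.
    - destruct Hex as [l Hl]. exists (Cmod (Kc / E) * Cmod w * l)%R. unfold M.
      exact (@is_series_scal R_AbsRing R_NormedModule (Cmod (Kc / E) * Cmod w)%R _ _ Hl). }
  assert (SC : forall x, box D x -> is_series (fun n => f n x) (integrand p d r s t z x)).
  { intros x Hx. destruct (HBX x Hx) as [HB HX].
    destruct (atail_gen t (Bx d r s x) (Xx d x) (p - 1) 1 w Hw HX) as [Hs _].
    replace (integrand p d r s t z x) with ((Kc / E * w) * genF t (Bx d r s x) (Xx d x) w 1 (p - 1)).
    - eapply is_series_ext; [|apply (is_series_Cscal (Kc / E * w) _ _ Hs)].
      intros n. unfold f. rewrite Cpow_S. symmetry. exact (assoc4 _ _ _ _).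
    - exact (integrand_eq p d r s t z x Hp Hd0 Hmono Hx Hz0 Hw). }
  assert (Ser := iint_series D f M (integrand p d r s t z) (fun n => proj1 (SA n)) SB1 SB2 SC).
  exists (/ Kc * iint D (integrand p d r s t z)).
  split.
  - eapply is_series_ext; [|apply (is_series_Cscal (/ Kc) _ _ Ser)].
    intros n. cbv beta. rewrite (proj2 (SA n)). exact (Kinv_cancel _ _ HK).
  - transitivity (Kc * (/ Kc * iint D (integrand p d r s t z))).
    field. exact HK. reflexivity.
Qed.
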